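(* Let $(X,d)$ be a finite metric space and $\alpha\ge 1$. If there is an $\alpha$-competitive randomized online algorithm for the continuous-time MTS model on $(X,d)$ (for piecewise continuous cost paths), then there is an $\alpha$-competitive randomized online algorithm for the discrete-time MTS model on $(X,d)$.
   Context: Discrete-time MTS: initial state $\rho_0\in X$; input a finite sequence of cost functions $c_t:X\to\mathbb R_+$; a randomized online algorithm chooses a random state $\rho_t$ whose law depends only on $c_1,\dots,c_t$, with cost $\sum_t[c_t(\rho_t)+d(\rho_{t-1},\rho_t)]$; $\mathsf{cost}^*$ is the infimum of this over deterministic state sequences from $\rho_0$. Continuous-time MTS: the input is a piecewise continuous path $(c(t))_{t\ge 0}$ of cost functions $c(t):X\to\mathbb R_+$ (supported on a bounded time interval). An online algorithm maps, for each $T\ge 0$, the path $(c(t))_{t\in[0,T]}$ to a random state $\rho(T)\in X$ (with $\rho$ piecewise constant, $\rho(0)=\rho_0$), paying service cost $\mathbb E\int_0^\infty c(t)(\rho(t))\,dt$ plus movement cost $\mathbb E\sum_{t:\rho(t^-)\ne\rho(t)}d(\rho(t^-),\rho(t))$. The offline optimum is the infimum of the same total cost over deterministic such paths starting from $\rho_0$. In both models, $\alpha$-competitive means: for every $\rho_0$ there is $\beta$ with expected online cost $\le\alpha\cdot$(offline optimum)$+\beta$ for every input. *)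

(* Defs.v *)
From Stdlib Require Import Reals Lra List ClassicalEpsilon.
Open Scope R_scope.

Definition is_metric {X : Type} (d : X -> X -> R) : Prop :=
  (forall x y, 0 <= d x y) /\
  (forall x y, d x y = 0 <-> x = y) /\
  (forall x y, d x y = d y x) /\
  (forall x y z, d x z <= d x y + d y z).

Definition finite_type (X : Type) : Prop := exists l : list X, forall x, In x l.

Inductive ereal : Type := Fin (r : R) | PInf.

Definition ele (a b : ereal) : Prop :=
  match a, b with
  | _, PInf => True
  | PInf, Fin _ => False
  | Fin x, Fin y => x <= y
  end.

Definition eaffine (alpha : R) (e : ereal) (beta : R) : ereal :=
  match e with Fin r => Fin (alpha * r + beta) | PInf => PInf end.

(* supremum of a set of reals, in [.., +oo]; empty set gives 0 (never used) *)
Definition esup (E : R -> Prop) : ereal :=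
  match excluded_middle_informative (exists x, E x) with
  | right _ => Fin 0
  | left Hne =>
      match excluded_middle_informative (bound E) with
      | left Hb => Fin (proj1_sig (completeness E Hb Hne))
      | right _ => PInf
      end
  end.

(* infimum of a set of extended reals that is bounded below (all sets used
   here consist of nonnegative costs); the set {+oo} or the empty set gives +oo *)
Definition einf (S : ereal -> Prop) : ereal :=
  match excluded_middle_informative (exists r, S (Fin r)) with
  | right _ => PInf
  | left _ =>
      match esup (fun y => S (Fin (- y))) with
      | Fin m => Fin (- m)
      | PInf => Fin 0 (* unreachable for sets bounded below *)
      end
  end.

Fixpoint rsum (n : nat) (g : nat -> R) : R :=
  match n with O => 0 | S m => rsum m g + g m end.

Record ProbSpace : Type := {
  Omega : Type;
  meas : (Omega -> Prop) -> Prop;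
  P : (Omega -> Prop) -> R;
  meas_ext : forall A B, (forall w, A w <-> B w) -> meas A -> meas B;
  P_ext : forall A B, (forall w, A w <-> B w) -> P A = P B;
  meas_full : meas (fun _ => True);
  meas_compl : forall A, meas A -> meas (fun w => ~ A w);
  meas_cunion : forall A : nat -> Omega -> Prop,
      (forall n, meas (A n)) -> meas (fun w => exists n, A n w);
  P_nonneg : forall A, meas A -> 0 <= P A;
  P_full : P (fun _ => True) = 1;
  P_cadd : forall A : nat -> Omega -> Prop,
      (forall n, meas (A n)) ->
      (forall m n w, m <> n -> A m w -> A n w -> False) ->
      infinite_sum (fun n => P (A n)) (P (fun w => exists n, A n w))
}.

Definition indic {T : Type} (A : T -> Prop) (w : T) : R :=
  if excluded_middle_informative (A w) then 1 else 0.

(* Expectation of a nonnegative [0,+oo]-valued random variable: the supremum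
   of the integrals of nonnegative simple functions below it (Lebesgue). *)
Definition Exp (Om : ProbSpace) (f : Omega Om -> ereal) : ereal :=
  esup (fun v => exists (n : nat) (a : nat -> R) (A : nat -> Omega Om -> Prop),
          (forall i, 0 <= a i) /\ (forall i, meas Om (A i)) /\
          (forall w, ele (Fin (rsum n (fun i => a i * indic (A i) w))) (f w)) /\
          v = rsum n (fun i => a i * P Om (A i))).

Section Disc.
Context {X : Type} (d : X -> X -> R).

Definition disc_valid_input (cs : list (X -> R)) : Prop :=
  Forall (fun c => forall x, 0 <= c x) cs.

(* cost of the state sequence rho (rho 0 = initial state) on input
   cs = [c_1; ...; c_n]:  sum_{t=1}^n c_t(rho t) + d(rho (t-1), rho t) *)
Definition disc_cost (rho : nat -> X) (cs : list (X -> R)) : R :=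
  rsum (length cs)
    (fun i => nth i cs (fun _ => 0) (rho (S i)) + d (rho i) (rho (S i))).

Definition disc_opt (rho0 : X) (cs : list (X -> R)) : ereal :=
  einf (fun e => exists sigma : nat -> X, sigma 0%nat = rho0 /\ e = Fin (disc_cost sigma cs)).

(* A randomized online algorithm on the probability space Om: given the initial
   state rho0, the prefix [c_1;...;c_t] of the input and the random seed w,
   it returns the state rho_t.  Hence rho_t depends only on c_1..c_t. *)
Definition disc_alg (Om : ProbSpace) (A : X -> list (X -> R) -> Omega Om -> X) : Prop :=
  (forall rho0 w, A rho0 nil w = rho0) /\
  (forall rho0 cs x, disc_valid_input cs -> meas Om (fun w => A rho0 cs w = x)).

Definition disc_competitive (alpha : R) : Prop :=
  exists (Om : ProbSpace) (A : X -> list (X -> R) -> Omega Om -> X),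
    disc_alg Om A /\
    forall rho0 : X, exists beta : R, forall cs, disc_valid_input cs ->
      ele (Exp Om (fun w => Fin (disc_cost (fun t => A rho0 (firstn t cs) w) cs)))
          (eaffine alpha (disc_opt rho0 cs) beta).
End Disc.

Definition partition (T : R) (k : nat) (p : nat -> R) : Prop :=
  p 0%nat = 0 /\ p k = T /\ (forall i, (i < k)%nat -> p i < p (S i)).

(* piecewise continuous on [0,oo): on each bounded interval finitely many pieces,
   on each open piece f agrees with a function continuous on the closed piece
   (so one-sided limits exist) *)
Definition piecewise_continuous (f : R -> R) : Prop :=
  forall T, 0 < T -> exists k p, partition T k p /\
    forall i, (i < k)%nat -> exists g : R -> R,
      (forall s, p i <= s <= p (S i) -> continuity_pt g s) /\
      (forall s, p i < s < p (S i) -> f s = g s).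

Definition piecewise_constant {X : Type} (rho : R -> X) : Prop :=
  forall T, 0 < T -> exists k p, partition T k p /\
    forall i, (i < k)%nat -> forall s, p i <= s < p (S i) -> rho s = rho (p i).

Section Cont.
Context {X : Type} (d : X -> X -> R).

Definition cont_valid_input (c : R -> X -> R) : Prop :=
  (forall t x, 0 <= t -> 0 <= c t x) /\
  (exists S, forall t x, S <= t -> c t x = 0) /\
  (forall x, piecewise_continuous (fun t => c t x)).

(* Riemann integral over [a,b] (0 if not Riemann integrable) *)
Definition RInt (f : R -> R) (a b : R) : R :=
  match excluded_middle_informative (inhabited (Riemann_integrable f a b)) with
  | left H => RiemannInt (epsilon H (fun _ => True))
  | right _ => 0
  end.

Definition left_lim (rho : R -> X) (t : R) (x : X) : Prop :=
  exists eps, 0 < eps /\ forall s, t - eps < s < t -> rho s = x.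

Definition left_val (rho : R -> X) (t : R) : X :=
  epsilon (inhabits (rho t)) (left_lim rho t).

Definition is_jump (rho : R -> X) (T t : R) : Prop :=
  0 < t <= T /\ left_val rho t <> rho t.

Definition movement (rho : R -> X) (T : R) : R :=
  match excluded_middle_informative
          (exists l : list R, NoDup l /\ forall t, In t l <-> is_jump rho T t) with
  | left H =>
      fold_right (fun t acc => d (left_val rho t) (rho t) + acc) 0
                 (proj1_sig (constructive_indefinite_description _ H))
  | right _ => 0
  end.

Definition cont_cost (c : R -> X -> R) (rho : R -> X) : ereal :=
  esup (fun v => exists T, 0 <= T /\
          v = RInt (fun t => c t (rho t)) 0 T + movement rho T).

Definition cont_opt (rho0 : X) (c : R -> X -> R) : ereal :=
  einf (fun e => exists rho : R -> X,
          piecewise_constant rho /\ rho 0 = rho0 /\ e = cont_cost c rho).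

(* A randomized online algorithm: given rho0, the input path c and the random
   seed w, returns a path B rho0 c w : R -> X whose value at T depends only on
   (c(t))_{t in [0,T]}. *)
Definition cont_alg (Om : ProbSpace) (B : X -> (R -> X -> R) -> Omega Om -> R -> X) : Prop :=
  (forall rho0 c c' w T, cont_valid_input c -> cont_valid_input c' -> 0 <= T ->
     (forall t x, 0 <= t <= T -> c t x = c' t x) -> B rho0 c w T = B rho0 c' w T) /\
  (forall rho0 c w, cont_valid_input c ->
     B rho0 c w 0 = rho0 /\ piecewise_constant (B rho0 c w)) /\
  (forall rho0 c T x, cont_valid_input c -> 0 <= T ->
     meas Om (fun w => B rho0 c w T = x)).

Definition cont_competitive (alpha : R) : Prop :=
  exists (Om : ProbSpace) (B : X -> (R -> X -> R) -> Omega Om -> R -> X),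
    cont_alg Om B /\
    forall rho0 : X, exists beta : R, forall c, cont_valid_input c ->
      ele (Exp Om (fun w => cont_cost c (B rho0 c w)))
          (eaffine alpha (cont_opt rho0 c) beta).
End Cont.

(* Main.v *)
Require Import Defs.
From Stdlib Require Import Reals Lra Lia List Permutation ClassicalEpsilon ZArith.
From Coquelicot Require Import Coquelicot.
From Stdlib Require Import Reals List.
Open Scope R_scope.

Lemma floorn_ex : forall s, 0 <= s -> exists j : nat, INR j <= s < INR j + 1.
Proof.
  intros s Hs. destruct (INR_unbounded s) as [N HN].
  revert s Hs HN. induction N as [|N IH]; intros s Hs HN.
  - simpl in HN. lra.
  - rewrite S_INR in HN. destruct (Rlt_dec s (INR N)) as [h|h].
    + apply IH; lra.
    + exists N. lra.
Qed.

Definition fl (s : R) : nat := pred (Z.to_nat (up s)).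

Lemma fl_spec : forall (j : nat) s, INR j <= s < INR j + 1 -> fl s = j.
Proof.
  intros j s H. unfold fl.
  assert (E : Z.of_nat (S j) = up s).
  { apply tech_up; rewrite <- INR_IZR_INZ, S_INR; lra. }
  rewrite <- E, Nat2Z.id. reflexivity.
Qed.

Lemma fl_neg : forall s, s < 0 -> fl s = 0%nat.
Proof.
  intros s H. unfold fl. destruct (archimed s) as [H1 H2].
  assert (IZR (up s) < 1) by lra.
  assert (up s < 1)%Z by (apply lt_IZR; lra).
  destruct (up s); simpl; try reflexivity; lia.
Qed.

Lemma fl_ge : forall s (n : nat), INR n <= s -> (n <= fl s)%nat.
Proof.
  intros s n H. destruct (floorn_ex s) as [j Hj].
  - pose proof (pos_INR n); lra.
  - rewrite (fl_spec j s Hj).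
    destruct (le_lt_dec n j) as [h|h]; [exact h|].
    assert (h' : (S j <= n)%nat) by lia. apply le_INR in h'. rewrite S_INR in h'. lra.
Qed.

Lemma fl_le : forall s (n : nat), s < INR n + 1 -> (fl s <= n)%nat.
Proof.
  intros s n H. destruct (Rlt_dec s 0) as [h|h].
  - rewrite fl_neg by exact h. lia.
  - destruct (floorn_ex s) as [j Hj]; [lra|].
    rewrite (fl_spec j s Hj).
    destruct (le_lt_dec j n) as [h2|h2]; [exact h2|].
    apply le_INR in h2. rewrite S_INR in h2. lra.
Qed.

Lemma ele_trans : forall a b c, ele a b -> ele b c -> ele a c.
Proof. intros [a|] [b|] [c|]; simpl; intros; try lra; tauto. Qed.

Lemma esup_ge : forall (E : R -> Prop) v D, E v -> D <= v -> ele (Fin D) (esup E).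
Proof.
  intros E v D Hv HD. unfold esup.
  destruct (excluded_middle_informative (exists x, E x)) as [Hne|Hne];
    [|exfalso; eauto].
  destruct (excluded_middle_informative (bound E)) as [Hb|Hb]; simpl; [|exact I].
  destruct (completeness E Hb Hne) as [m [Hm1 Hm2]]. simpl.
  specialize (Hm1 v Hv). lra.
Qed.

Lemma esup_le : forall (E : R -> Prop) D, (exists v, E v) -> (forall v, E v -> v <= D) ->
  ele (esup E) (Fin D).
Proof.
  intros E D Hne' HD. unfold esup.
  destruct (excluded_middle_informative (exists x, E x)) as [Hne|Hne]; [|contradiction].
  destruct (excluded_middle_informative (bound E)) as [Hb|Hb].
  - destruct (completeness E Hb Hne) as [m [Hm1 Hm2]]. simpl.
    apply Hm2. intros x Hx. apply HD; exact Hx.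
  - exfalso. apply Hb. exists D. intros x Hx. apply HD; exact Hx.
Qed.

Lemma esup_mono : forall (E1 E2 : R -> Prop), (exists v, E1 v) ->
  (forall v, E1 v -> E2 v) -> ele (esup E1) (esup E2).
Proof.
  intros E1 E2 Hne1 H12. unfold esup at 2.
  assert (Hne2 : exists x, E2 x) by (destruct Hne1 as [v Hv]; eauto).
  destruct (excluded_middle_informative (exists x, E2 x)) as [Hne|Hne]; [|contradiction].
  destruct (excluded_middle_informative (bound E2)) as [Hb|Hb].
  - destruct (completeness E2 Hb Hne) as [m [Hm1 Hm2]]. simpl.
    apply esup_le; [exact Hne1|]. intros v Hv. apply Hm1, H12, Hv.
  - destruct (esup E1); exact I.
Qed.

Lemma eaffine_mono : forall alpha beta a b, 0 <= alpha -> ele a b ->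
  ele (eaffine alpha a beta) (eaffine alpha b beta).
Proof.
  intros alpha beta [a|] [b|]; simpl; intros; try tauto.
  apply Rplus_le_compat_r. apply Rmult_le_compat_l; assumption.
Qed.

Lemma einf_mono : forall (S1 S2 : ereal -> Prop),
  (forall r, S2 (Fin r) -> exists r', S1 (Fin r') /\ r' <= r) ->
  (forall r, S2 (Fin r) -> 0 <= r) ->
  ele (einf S1) (einf S2).
Proof.
  intros S1 S2 H N2. unfold einf at 2.
  destruct (excluded_middle_informative (exists r, S2 (Fin r))) as [Hex|Hn].
  2:{ destruct (einf S1); exact I. }
  destruct Hex as [r0 Hr0].
  assert (Hb2 : bound (fun y => S2 (Fin (- y)))).
  { exists 0. intros y Hy. specialize (N2 _ Hy). lra. }
  unfold esup.
  destruct (excluded_middle_informative (exists x, S2 (Fin (- x)))) as [Hne2|Hne2];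
    [|exfalso; apply Hne2; exists (- r0); rewrite Ropp_involutive; exact Hr0].
  destruct (excluded_middle_informative (bound (fun y => S2 (Fin (- y))))) as [Hb2'|Hb];
    [|contradiction].
  destruct (completeness _ Hb2' Hne2) as [m2 [Hm21 Hm22]]. simpl.
  unfold einf.
  destruct (H r0 Hr0) as [r1 [Hr1 _]].
  destruct (excluded_middle_informative (exists r, S1 (Fin r))) as [Hx1|Hn1];
    [|exfalso; eauto].
  unfold esup.
  destruct (excluded_middle_informative (exists x, S1 (Fin (- x)))) as [Hne1|Hne1];
    [|exfalso; apply Hne1; exists (- r1); rewrite Ropp_involutive; exact Hr1].
  destruct (excluded_middle_informative (bound (fun y => S1 (Fin (- y))))) as [Hb1|Hb1].
  - destruct (completeness _ Hb1 Hne1) as [m1 [Hm11 Hm12]]. simpl.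
    assert (m2 <= m1).
    { apply Hm22. intros y Hy. destruct (H _ Hy) as [r' [Hr' Hle]].
      assert (- r' <= m1). { apply Hm11. rewrite Ropp_involutive. exact Hr'. }
      lra. }
    lra.
  - simpl. assert (m2 <= 0).
    { apply Hm22. intros y Hy. specialize (N2 _ Hy). lra. }
    lra.
Qed.

Lemma Exp_mono : forall (Om : ProbSpace) (f g : Omega Om -> ereal),
  (forall w, ele (Fin 0) (f w)) ->
  (forall w, ele (f w) (g w)) -> ele (Exp Om f) (Exp Om g).
Proof.
  intros Om f g H0 Hfg. unfold Exp. apply esup_mono.
  - exists 0. exists 0%nat, (fun _ => 0), (fun _ _ => True).
    repeat split; simpl; try (intros; lra).
    + intros; apply meas_full.
    + intros w. apply H0.
  - intros v [n [a [A [H1 [H2 [H3 H4]]]]]]. exists n, a, A. repeat split; auto.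
    intros w. eapply ele_trans; [apply H3| apply Hfg].
Qed.

Definition fsum {A : Type} (l : list A) (h : A -> R) : R :=
  fold_right (fun x acc => h x + acc) 0 l.

Lemma fsum_perm : forall {A} (l l' : list A) h, Permutation l l' -> fsum l h = fsum l' h.
Proof.
  intros A l l' h HP. induction HP; unfold fsum in *; simpl; try lra.
Qed.

Lemma fsum_map : forall {A B} (f : A -> B) l h, fsum (map f l) h = fsum l (fun x => h (f x)).
Proof. intros. induction l; unfold fsum in *; simpl; [reflexivity| rewrite IHl; reflexivity]. Qed.

Lemma fsum_filter : forall {A} (b : A -> bool) l h,
  (forall x, In x l -> b x = false -> h x = 0) -> fsum (filter b l) h = fsum l h.
Proof.
  intros A b l h H. induction l as [|a l IH]; [reflexivity|].
  simpl. assert (IH' : fsum (filter b l) h = fsum l h) by (apply IH; intros; apply H; simpl; auto).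
  destruct (b a) eqn:E; unfold fsum in *; simpl; rewrite IH'; [reflexivity|].
  rewrite (H a (or_introl eq_refl) E). lra.
Qed.

Lemma fsum_ext_in : forall {A} l (h h' : A -> R),
  (forall x, In x l -> h x = h' x) -> fsum l h = fsum l h'.
Proof.
  intros A l h h' H. induction l as [|a l IH]; [reflexivity|].
  unfold fsum in *; simpl. rewrite H by (simpl; auto). rewrite IH; auto.
  intros; apply H; simpl; auto.
Qed.

Lemma fsum_seq : forall k g, fsum (seq 0 k) g = rsum k g.
Proof.
  induction k as [|k IH]; intros g; [reflexivity|].
  rewrite seq_S. unfold fsum in *. rewrite fold_right_app. simpl.
  rewrite <- IH. simpl.
  assert (Hgen : forall l c, fold_right (fun x acc => g x + acc) c l =
                             fold_right (fun x acc => g x + acc) 0 l + c).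
  { induction l as [|a l IHl]; intros c; simpl; [lra| rewrite IHl; lra]. }
  rewrite Hgen. lra.
Qed.

Lemma rsum_nonneg : forall n g, (forall j, 0 <= g j) -> 0 <= rsum n g.
Proof. induction n; intros g H; simpl; [lra| pose proof (IHn g H); pose proof (H n); lra]. Qed.

Lemma rsum_mono_len : forall a b g, (a <= b)%nat -> (forall j, 0 <= g j) -> rsum a g <= rsum b g.
Proof.
  intros a b g Hab H. induction Hab; [lra|]. simpl. pose proof (H m); lra.
Qed.

Lemma rsum_le : forall n g h, (forall j, (j < n)%nat -> g j <= h j) -> rsum n g <= rsum n h.
Proof.
  induction n; intros g h H; simpl; [lra|].
  pose proof (IHn g h (fun j hj => H j ltac:(lia))). pose proof (H n ltac:(lia)). lra.
Qed.

Lemma rsum_ext : forall n g h, (forall j, (j < n)%nat -> g j = h j) -> rsum n g = rsum n h.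
Proof.
  induction n; intros g h H; simpl; [lra|].
  rewrite (IHn g h (fun j hj => H j ltac:(lia))), (H n ltac:(lia)). reflexivity.
Qed.

Lemma rsum_plus : forall n g h, rsum n (fun j => g j + h j) = rsum n g + rsum n h.
Proof. induction n; intros; simpl; [lra| rewrite IHn; lra]. Qed.

Lemma rsum_shift : forall n g, rsum (S n) g = g 0%nat + rsum n (fun i => g (S i)).
Proof. induction n; intros g; [simpl; lra|].
  change (rsum (S (S n)) g) with (rsum (S n) g + g (S n)). rewrite IHn. simpl. lra. Qed.

Section Metric.
Context {X : Type} (d : X -> X -> R) (hmet : is_metric d).

Lemma d_nonneg : forall x y, 0 <= d x y.
Proof. apply hmet. Qed.
Lemma d_refl : forall x, d x x = 0.
Proof. intros. apply hmet. reflexivity. Qed.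
Lemma d_tri : forall x y z, d x z <= d x y + d y z.
Proof. apply hmet. Qed.

Lemma chain_le : forall (y : nat -> X) a b, (a <= b)%nat ->
  d (y a) (y b) <= rsum b (fun j => d (y j) (y (S j))) - rsum a (fun j => d (y j) (y (S j))).
Proof.
  intros y a b Hab. induction Hab.
  - rewrite d_refl. lra.
  - simpl. pose proof (d_tri (y a) (y m) (y (S m))). lra.
Qed.

Lemma tele : forall (y : nat -> X) (e : nat -> nat) n,
  (forall t, (t < n)%nat -> (e t <= e (S t))%nat) ->
  rsum n (fun t => d (y (e t)) (y (e (S t)))) <=
  rsum (e n) (fun j => d (y j) (y (S j))) - rsum (e 0%nat) (fun j => d (y j) (y (S j))).
Proof.
  intros y e n. induction n; intros H; simpl; [lra|].
  pose proof (IHn (fun t ht => H t ltac:(lia))).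
  pose proof (chain_le y (e n) (e (S n)) (H n ltac:(lia))). lra.
Qed.

End Metric.

Section Part.
Context (T : R) (k : nat) (p : nat -> R) (HP : Defs.partition T k p).

Lemma part_lt : forall i j, (i < j)%nat -> (j <= k)%nat -> p i < p j.
Proof.
  destruct HP as [H0 [Hk Hs]].
  intros i j Hij Hjk. induction Hij.
  - apply Hs; lia.
  - pose proof (Hs m ltac:(lia)). pose proof (IHHij ltac:(lia)). lra.
Qed.

Lemma part_le : forall i j, (i <= j)%nat -> (j <= k)%nat -> p i <= p j.
Proof.
  intros i j Hij Hjk. destruct (Nat.eq_dec i j) as [->|h]; [lra|].
  left. apply part_lt; lia.
Qed.

Lemma locate_open : forall s, 0 <= s < T -> exists j, (j < k)%nat /\ p j <= s < p (S j).
Proof.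
  destruct HP as [H0 [Hk Hs]]. intros s Hst.
  assert (G : forall m, (m <= k)%nat -> s < p m -> exists j, (j < m)%nat /\ p j <= s < p (S j)).
  { induction m; intros Hm Hlt.
    - rewrite H0 in Hlt. lra.
    - destruct (Rlt_dec s (p m)) as [h|h].
      + destruct (IHm ltac:(lia) h) as [j [Hj1 Hj2]]. exists j; split; [lia|exact Hj2].
      + exists m. split; [lia| lra]. }
  destruct (G k (le_n k) ltac:(rewrite Hk; lra)) as [j Hj]. exists j; exact Hj.
Qed.

Lemma locate_closed : forall t, 0 < t <= T -> exists j, (j < k)%nat /\ p j < t <= p (S j).
Proof.
  destruct HP as [H0 [Hk Hs]]. intros t Htt.
  assert (G : forall m, (m <= k)%nat -> t <= p m -> exists j, (j < m)%nat /\ p j < t <= p (S j)).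
  { induction m; intros Hm Hlt.
    - rewrite H0 in Hlt. lra.
    - destruct (Rle_dec t (p m)) as [h|h].
      + destruct (IHm ltac:(lia) h) as [j [Hj1 Hj2]]. exists j; split; [lia|exact Hj2].
      + exists m. split; [lia| lra]. }
  destruct (G k (le_n k) ltac:(rewrite Hk; lra)) as [j Hj]. exists j; exact Hj.
Qed.

Lemma index_mono : forall s s' j j', s <= s' -> (j < k)%nat -> (j' < k)%nat ->
  p j <= s < p (S j) -> p j' <= s' < p (S j') -> (j <= j')%nat.
Proof.
  intros s s' j j' Hss Hj Hj' H1 H2.
  destruct (le_lt_dec j j') as [h|h]; [exact h|].
  pose proof (part_le (S j') j ltac:(lia) ltac:(lia)). lra.
Qed.

End Part.

Section Mov.
Context {X : Type} (d : X -> X -> R) (hmet : is_metric d).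

Lemma left_lim_unique : forall (rho : R -> X) t x y, left_lim rho t x -> left_lim rho t y -> x = y.
Proof.
  intros rho t x y [e1 [He1 H1]] [e2 [He2 H2]].
  set (s := t - Rmin e1 e2 / 2).
  assert (Hm1 : Rmin e1 e2 <= e1) by apply Rmin_l.
  assert (Hm2 : Rmin e1 e2 <= e2) by apply Rmin_r.
  assert (Hm0 : 0 < Rmin e1 e2) by (apply Rmin_glb_lt; assumption).
  rewrite <- (H1 s), <- (H2 s); unfold s; [reflexivity| lra| lra].
Qed.

Lemma left_val_eq : forall (rho : R -> X) t x, left_lim rho t x -> left_val rho t = x.
Proof.
  intros rho t x H. unfold left_val.
  apply (left_lim_unique rho t); [| exact H].
  apply epsilon_spec. exists x; exact H.
Qed.

Context (rho : R -> X) (T : R) (k : nat) (p : nat -> R) (HT : 0 < T) (HP : Defs.partition T k p)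
  (Hc : forall i, (i < k)%nat -> forall s, p i <= s < p (S i) -> rho s = rho (p i)).

Lemma left_val_piece : forall j t, (j < k)%nat -> p j < t <= p (S j) -> left_val rho t = rho (p j).
Proof.
  intros j t Hj Ht. apply left_val_eq. exists (t - p j). split; [lra|].
  intros s Hs. apply Hc; [exact Hj| lra].
Qed.

Lemma jump_char : forall t, is_jump rho T t <->
  exists j, (j < k)%nat /\ t = p (S j) /\ rho (p j) <> rho (p (S j)).
Proof.
  pose proof HP as [H0 [Hk Hs]].
  intros t. split.
  - intros [Ht Hne]. destruct (locate_closed T k p HP t Ht) as [j [Hj Hjt]].
    rewrite (left_val_piece j t Hj Hjt) in Hne.
    destruct (Rle_lt_or_eq_dec _ _ (proj2 Hjt)) as [h|h].
    + exfalso. apply Hne. symmetry. apply Hc; [exact Hj| lra].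
    + exists j. subst t. auto.
  - intros [j [Hj [-> Hne]]]. split.
    + pose proof (part_lt T k p HP 0 (S j) ltac:(lia) ltac:(lia)).
      pose proof (part_le T k p HP (S j) k ltac:(lia) ltac:(lia)). lra.
    + rewrite (left_val_piece j (p (S j)) Hj); [exact Hne|].
      pose proof (Hs j Hj). lra.
Qed.

Definition jb (j : nat) : bool :=
  if excluded_middle_informative (rho (p j) = rho (p (S j))) then false else true.

Lemma movement_partition :
  movement d rho T = rsum k (fun j => d (rho (p j)) (rho (p (S j)))).
Proof.
  set (L0 := map (fun j => p (S j)) (filter jb (seq 0 k))).
  assert (HL0 : forall t, In t L0 <-> is_jump rho T t).
  { intros t. rewrite jump_char. unfold L0. rewrite in_map_iff. split.
    - intros [j [Hj1 Hj2]]. apply filter_In in Hj2. destruct Hj2 as [Hj2 Hj3].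
      apply in_seq in Hj2. exists j. unfold jb in Hj3.
      destruct (excluded_middle_informative (rho (p j) = rho (p (S j)))); [discriminate|].
      repeat split; auto; lia.
    - intros [j [Hj1 [Hj2 Hj3]]]. exists j. split; [auto|].
      apply filter_In. split; [apply in_seq; lia|].
      unfold jb. destruct (excluded_middle_informative (rho (p j) = rho (p (S j)))); tauto. }
  assert (HN0 : NoDup L0).
  { unfold L0. apply NoDup_map_NoDup_ForallPairs.
    - intros a b Ha Hb Hab. apply filter_In in Ha, Hb. destruct Ha as [Ha _], Hb as [Hb _].
      apply in_seq in Ha, Hb.
      destruct (Nat.lt_total a b) as [h|[h|h]]; [|exact h|].
      + pose proof (part_lt T k p HP (S a) (S b) ltac:(lia) ltac:(lia)). lra.
      + pose proof (part_lt T k p HP (S b) (S a) ltac:(lia) ltac:(lia)). lra.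
    - apply NoDup_filter, seq_NoDup. }
  unfold movement.
  destruct (excluded_middle_informative
     (exists l : list R, NoDup l /\ (forall t, In t l <-> is_jump rho T t))) as [H|H].
  2:{ exfalso. apply H. exists L0. auto. }
  destruct (constructive_indefinite_description _ H) as [L [HL1 HL2]]. simpl.
  change (fsum L (fun t => d (left_val rho t) (rho t)) = rsum k (fun j => d (rho (p j)) (rho (p (S j))))).
  rewrite (fsum_perm L L0).
  2:{ apply NoDup_Permutation; auto. intros t. rewrite HL2, HL0. tauto. }
  unfold L0. rewrite fsum_map. rewrite fsum_filter.
  - rewrite <- fsum_seq. apply fsum_ext_in. intros j Hj. apply in_seq in Hj.
    rewrite (left_val_piece j); [reflexivity| lia|].
    pose proof (proj2 (proj2 HP) j ltac:(lia)). lra.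
  - intros j Hj Hb. apply in_seq in Hj. unfold jb in Hb.
    destruct (excluded_middle_informative (rho (p j) = rho (p (S j)))) as [e|]; [|discriminate].
    rewrite (left_val_piece j); [| lia|].
    + rewrite e. apply d_refl, hmet.
    + pose proof (proj2 (proj2 HP) j ltac:(lia)). lra.
Qed.

End Mov.

Lemma Defs_RInt_eq : forall f a b, ex_RInt f a b -> Defs.RInt f a b = RInt f a b.
Proof.
  intros f a b H. unfold Defs.RInt.
  destruct (excluded_middle_informative (inhabited (Riemann_integrable f a b))) as [Hi|Hi].
  - symmetry. apply RInt_Reals.
  - exfalso. apply Hi. constructor. apply ex_RInt_Reals_0. exact H.
Qed.

Lemma RInt_const_R : forall c a b, RInt (fun _ => c) a b = (b - a) * c.
Proof. intros. rewrite RInt_const. reflexivity. Qed.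

Lemma step_int : forall (h : R -> R) (a : nat -> R),
  (forall j s, INR j < s < INR j + 1 -> h s = a j) ->
  forall N, ex_RInt h 0 (INR N) /\ RInt h 0 (INR N) = rsum N a.
Proof.
  intros h a Ha N. induction N as [|N [IH1 IH2]].
  - simpl. split; [apply ex_RInt_point| rewrite RInt_point; reflexivity].
  - assert (Hp : ex_RInt h (INR N) (INR (S N)) /\ RInt h (INR N) (INR (S N)) = a N).
    { rewrite S_INR. pose proof (pos_INR N).
      assert (Hext : forall x, Rmin (INR N) (INR N + 1) < x < Rmax (INR N) (INR N + 1) ->
                      (fun _ => a N) x = h x).
      { intros x Hx. rewrite Rmin_left, Rmax_right in Hx by lra. symmetry. apply Ha. exact Hx. }
      split.
      - apply (ex_RInt_ext (fun _ => a N)); [exact Hext| apply ex_RInt_const].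
      - rewrite <- (RInt_ext (V := R_CompleteNormedModule) (fun _ => a N) h _ _ Hext).
        rewrite RInt_const_R. match goal with |- ?u = ?v => change (@eq R u v) end. ring. }
    destruct Hp as [Hp1 Hp2]. split.
    + eapply ex_RInt_Chasles; eauto.
    + rewrite <- (RInt_Chasles h 0 (INR N) (INR (S N)) IH1 Hp1).
      change (plus (RInt h 0 (INR N)) (RInt h (INR N) (INR (S N)))) with
        (RInt h 0 (INR N) + RInt h (INR N) (INR (S N))).
      rewrite IH2, Hp2. reflexivity.
Qed.

Lemma ex_RInt_sub : forall (h : R -> R) A B a b, ex_RInt h A B -> A <= a -> a <= b -> b <= B ->
  ex_RInt h a b.
Proof.
  intros h A B a b H H1 H2 H3.
  apply (ex_RInt_Chasles_2 h A a b); [lra|].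
  apply (ex_RInt_Chasles_1 h A b B); [lra| exact H].
Qed.

Lemma int_split : forall (h : R -> R) N, ex_RInt h 0 (INR N) ->
  RInt h 0 (INR N) = rsum N (fun j => RInt h (INR j) (INR j + 1)).
Proof.
  intros h N H. induction N as [|N IH].
  - simpl. rewrite RInt_point; reflexivity.
  - assert (HN := pos_INR N). rewrite S_INR in H |- *. simpl.
    assert (H1 : ex_RInt h 0 (INR N)) by (apply (ex_RInt_sub h 0 (INR N + 1)); auto; lra).
    assert (H2 : ex_RInt h (INR N) (INR N + 1)) by (apply (ex_RInt_sub h 0 (INR N + 1)); auto; lra).
    rewrite <- (RInt_Chasles h 0 (INR N) (INR N + 1) H1 H2).
    change (plus (RInt h 0 (INR N)) (RInt h (INR N) (INR N + 1))) with
        (RInt h 0 (INR N) + RInt h (INR N) (INR N + 1)).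
    rewrite IH by exact H1. reflexivity.
Qed.

Section Pc.
Context {X : Type} (F : R -> X -> R) (rho : R -> X) (T : R) (k : nat) (p : nat -> R)
  (HP : Defs.partition T k p)
  (Hc : forall i, (i < k)%nat -> forall s, p i <= s < p (S i) -> rho s = rho (p i))
  (HF : forall x a b, 0 <= a -> a <= b -> b <= T -> ex_RInt (fun s => F s x) a b).

Lemma pc_int : ex_RInt (fun s => F s (rho s)) 0 T.
Proof.
  pose proof HP as [H0 [Hk Hs]].
  assert (G : forall m, (m <= k)%nat -> ex_RInt (fun s => F s (rho s)) 0 (p m)).
  { induction m; intros Hm.
    - rewrite H0. apply ex_RInt_point.
    - apply (ex_RInt_Chasles _ 0 (p m)); [apply IHm; lia|].
      pose proof (Hs m ltac:(lia)).
      apply (ex_RInt_ext (fun s => F s (rho (p m)))).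
      + intros x Hx. rewrite Rmin_left, Rmax_right in Hx by lra.
        rewrite (Hc m ltac:(lia) x) by lra. reflexivity.
      + apply HF.
        * rewrite <- H0. apply (part_le T k p HP); lia.
        * lra.
        * rewrite <- Hk. apply (part_le T k p HP); lia. }
  rewrite <- Hk. apply G. lia.
Qed.
End Pc.

Section Cin.
Context {X : Type}.

Definition cin (cs : list (X -> R)) (s : R) (x : X) : R :=
  match fl s with O => 0 | S i => nth i cs (fun _ => 0) x end.

Definition cval (cs : list (X -> R)) (j : nat) (x : X) : R :=
  match j with O => 0 | S i => nth i cs (fun _ => 0) x end.

Lemma cin_piece : forall cs j s x, INR j <= s < INR j + 1 -> cin cs s x = cval cs j x.
Proof. intros cs j s x H. unfold cin. rewrite (fl_spec j s H). reflexivity. Qed.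

Lemma cin_int : forall cs x N, ex_RInt (fun s => cin cs s x) 0 (INR N).
Proof.
  intros cs x N.
  assert (H : forall j s, INR j < s < INR j + 1 -> (fun s => cin cs s x) s = cval cs j x).
  { intros j s Hs. apply cin_piece. lra. }
  exact (proj1 (step_int _ (fun j => cval cs j x) H N)).
Qed.

Lemma cin_int_sub : forall cs x a b, 0 <= a -> a <= b -> ex_RInt (fun s => cin cs s x) a b.
Proof.
  intros cs x a b Ha Hab. destruct (INR_unbounded b) as [N HN].
  apply (ex_RInt_sub _ 0 (INR N)); [apply cin_int| lra| lra| lra].
Qed.

End Cin.

Lemma int_part_ex : forall T, 0 < T -> exists m : nat, INR m < T <= INR m + 1.
Proof.
  intros T HT. destruct (floorn_ex T ltac:(lra)) as [j Hj].
  destruct (Rlt_dec (INR j) T) as [h|h].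
  - exists j. lra.
  - destruct j as [|j]; [exfalso; apply h; simpl; lra|].
    exists j. rewrite S_INR in Hj, h. lra.
Qed.

Definition ipart (m : nat) (T : R) (i : nat) : R := if Nat.leb i m then INR i else T.

Lemma ipart_le : forall m T i, (i <= m)%nat -> ipart m T i = INR i.
Proof. intros m T i H. unfold ipart. apply Nat.leb_le in H. rewrite H. reflexivity. Qed.

Lemma ipart_Sm : forall m T, ipart m T (S m) = T.
Proof. intros m T. unfold ipart. replace (Nat.leb (S m) m) with false; [reflexivity|].
  symmetry. apply Nat.leb_gt. lia. Qed.

Lemma ipart_partition : forall m T, INR m < T <= INR m + 1 -> Defs.partition T (S m) (ipart m T).
Proof.
  intros m T H. split; [|split].
  - apply ipart_le; lia.
  - apply ipart_Sm.
  - intros i Hi. destruct (Nat.eq_dec i m) as [->|h].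
    + rewrite ipart_le, ipart_Sm by lia. lra.
    + rewrite !ipart_le by lia. rewrite S_INR. lra.
Qed.

Lemma ipart_piece : forall m T i s, INR m < T <= INR m + 1 -> (i < S m)%nat ->
  ipart m T i <= s < ipart m T (S i) -> INR i <= s < INR i + 1.
Proof.
  intros m T i s H Hi Hs. rewrite ipart_le in Hs by lia.
  destruct (Nat.eq_dec i m) as [->|h].
  - rewrite ipart_Sm in Hs. lra.
  - rewrite ipart_le, S_INR in Hs by lia. lra.
Qed.

Section V.
Context {X : Type}.

Lemma nth_nonneg : forall (cs : list (X -> R)), disc_valid_input cs ->
  forall i x, 0 <= nth i cs (fun _ => 0) x.
Proof.
  intros cs Hv i x. destruct (le_lt_dec (length cs) i) as [h|h].
  - rewrite nth_overflow by exact h. lra.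
  - unfold disc_valid_input in Hv. rewrite Forall_forall in Hv.
    apply Hv. apply nth_In. exact h.
Qed.

Lemma cval_nonneg : forall (cs : list (X -> R)), disc_valid_input cs -> forall j x, 0 <= cval cs j x.
Proof. intros cs Hv [|j] x; simpl; [lra| apply nth_nonneg; exact Hv]. Qed.

Lemma cin_nonneg : forall (cs : list (X -> R)), disc_valid_input cs -> forall s x, 0 <= cin cs s x.
Proof. intros cs Hv s x. unfold cin. destruct (fl s); [lra| apply nth_nonneg; exact Hv]. Qed.

Lemma cin_valid : forall (cs : list (X -> R)), disc_valid_input cs -> cont_valid_input (cin cs).
Proof.
  intros cs Hv. split; [|split].
  - intros t x _. apply cin_nonneg; exact Hv.
  - exists (INR (length cs) + 1). intros t x Ht. unfold cin.
    assert (Hf : (S (length cs) <= fl t)%nat) by (apply fl_ge; rewrite S_INR; exact Ht).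
    destruct (fl t) as [|i]; [lia|]. rewrite nth_overflow by lia. reflexivity.
  - intros x T HT. destruct (int_part_ex T HT) as [m Hm].
    exists (S m), (ipart m T). split; [apply ipart_partition; exact Hm|].
    intros i Hi. exists (fun _ => cval cs i x). split.
    + intros s _. apply continuity_pt_const. intros u v; reflexivity.
    + intros s Hs. apply cin_piece. apply (ipart_piece m T i s Hm Hi). lra.
Qed.

Lemma cin_firstn : forall (cs : list (X -> R)) t s x, s < INR t + 1 -> cin (firstn t cs) s x = cin cs s x.
Proof.
  intros cs t s x H. unfold cin. pose proof (fl_le s t H).
  destruct (fl s) as [|i]; [reflexivity|].
  rewrite nth_firstn. replace (i <? t)%nat with true; [reflexivity|].
  symmetry. apply Nat.ltb_lt. lia.
Qed.

End V.

Definition q (m kk : nat) : R := INR kk / (INR kk + INR m + 1).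

Lemma q_range : forall m kk, 0 <= q m kk < 1.
Proof.
  intros m kk. unfold q. pose proof (pos_INR kk). pose proof (pos_INR m).
  split.
  - apply Rmult_le_pos; [lra|]. left. apply Rinv_0_lt_compat. lra.
  - apply Rmult_lt_reg_r with (INR kk + INR m + 1); [lra|].
    unfold Rdiv. rewrite Rmult_assoc, Rinv_l by lra. lra.
Qed.

Lemma density : forall a b, 0 <= a -> a < b -> b <= 1 -> exists m kk, a <= q m kk < b.
Proof.
  intros a b Ha Hab Hb.
  destruct (INR_unbounded (1 / (b - a))) as [N HN].
  assert (Hpos : 0 < 1 / (b - a)) by (apply Rdiv_lt_0_compat; lra).
  set (D := INR N) in *.
  assert (HD : 0 < D) by lra.
  assert (HbD : 1 < (b - a) * D).
  { apply Rmult_lt_reg_r with (/ (b - a)). { apply Rinv_0_lt_compat; lra. }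
    unfold Rdiv in HN. rewrite Rmult_1_l in HN.
    replace ((b - a) * D * / (b - a)) with D by (field; lra). lra. }
  destruct (floorn_ex (a * D) ltac:(apply Rmult_le_pos; lra)) as [j Hj].
  assert (HjN : (S j < N)%nat).
  { apply INR_lt. fold D. rewrite S_INR. assert (a * D + 1 < b * D) by nra. nra. }
  exists (N - S j - 1)%nat, (S j).
  assert (Hden : INR (S j) + INR (N - S j - 1) + 1 = D).
  { unfold D. rewrite <- plus_INR, <- S_INR. f_equal. lia. }
  unfold q. rewrite Hden. rewrite S_INR in *.
  split.
  - apply Rmult_le_reg_r with D; [exact HD|]. unfold Rdiv.
    rewrite Rmult_assoc, Rinv_l by lra. lra.
  - apply Rmult_lt_reg_r with D; [exact HD|]. unfold Rdiv.
    rewrite Rmult_assoc, Rinv_l by lra. lra.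
Qed.

Section Alg.
Context {X : Type} (l : list X) (hl : forall x, In x l).

Fixpoint amin (x0 : X) (Pm : X -> Prop) (l' : list X) : X :=
  match l' with
  | nil => x0
  | y :: r => if excluded_middle_informative (Pm y) then y else amin x0 Pm r
  end.

Lemma amin_spec : forall x0 Pm l', (exists y, In y l' /\ Pm y) -> Pm (amin x0 Pm l').
Proof.
  intros x0 Pm l'. induction l' as [|a r IH]; intros [y [Hy HP]]; [destruct Hy|].
  simpl. destruct (excluded_middle_informative (Pm a)) as [h|h]; [exact h|].
  apply IH. destruct Hy as [->|Hy]; [contradiction| eauto].
Qed.

Definition ismin (V : X -> Prop) (f : X -> R) (y : X) : Prop := V y /\ forall z, V z -> f y <= f z.

Lemma exists_min : forall (V : X -> Prop) (f : X -> R), (exists y, V y) -> exists y, ismin V f y.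
Proof.
  intros V f [y0 Hy0].
  assert (G : forall l', (exists y, In y l' /\ V y) ->
            exists y, V y /\ forall z, In z l' -> V z -> f y <= f z).
  { induction l' as [|a r IH]; intros [y [Hy HV]]; [destruct Hy|].
    destruct (classic (exists y, In y r /\ V y)) as [Hr|Hr].
    - destruct (IH Hr) as [b [Hb1 Hb2]].
      destruct (classic (V a)) as [Ha|Ha].
      + destruct (Rle_dec (f a) (f b)) as [h|h].
        * exists a. split; [exact Ha|]. intros z [->|Hz] Hvz; [lra|]. specialize (Hb2 z Hz Hvz). lra.
        * exists b. split; [exact Hb1|]. intros z [->|Hz] Hvz; [lra|]. auto.
      + exists b. split; [exact Hb1|]. intros z [->|Hz] Hvz; [contradiction|]. auto.
    - destruct Hy as [->|Hy]; [|exfalso; eauto].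
      exists y. split; [exact HV|]. intros z [->|Hz] Hvz; [lra|]. exfalso; eauto. }
  destruct (G l (ex_intro _ y0 (conj (hl y0) Hy0))) as [y [Hy1 Hy2]].
  exists y. split; [exact Hy1|]. intros z Hz. apply Hy2; [apply hl| exact Hz].
Qed.

Lemma amin_ismin : forall x0 V f, (exists y, V y) -> ismin V f (amin x0 (ismin V f) l).
Proof.
  intros x0 V f Hne. apply amin_spec. destruct (exists_min V f Hne) as [y Hy].
  exists y. split; [apply hl| exact Hy].
Qed.

Context (Om : ProbSpace) (B : X -> (R -> X -> R) -> Omega Om -> R -> X) (hB : cont_alg Om B).

Definition visited (rho0 : X) (cs : list (X -> R)) (w : Omega Om) (y : X) : Prop :=
  exists m kk, B rho0 (cin cs) w (INR (length cs) + q m kk) = y.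

Definition Adisc (rho0 : X) (cs : list (X -> R)) (w : Omega Om) : X :=
  match length cs with
  | O => rho0
  | S i => amin rho0 (ismin (visited rho0 cs w) (nth i cs (fun _ => 0))) l
  end.

Lemma visited_all : forall rho0 cs w s, disc_valid_input cs ->
  INR (length cs) <= s < INR (length cs) + 1 -> visited rho0 cs w (B rho0 (cin cs) w s).
Proof.
  intros rho0 cs w s Hv Hs. set (n := length cs) in *.
  destruct hB as [_ [HB2 _]].
  destruct (HB2 rho0 (cin cs) w (cin_valid cs Hv)) as [_ Hpc].
  pose proof (pos_INR n).
  destruct (Hpc (INR n + 1) ltac:(lra)) as [k [p [HP Hc]]].
  destruct (locate_open _ k p HP s ltac:(lra)) as [j [Hj Hjs]].
  set (u := Rmin (p (S j)) (INR n + 1)).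
  assert (Hu1 : u <= p (S j)) by apply Rmin_l.
  assert (Hu2 : u <= INR n + 1) by apply Rmin_r.
  assert (Hu3 : s < u) by (apply Rmin_glb_lt; lra).
  destruct (density (s - INR n) (u - INR n) ltac:(lra) ltac:(lra) ltac:(lra)) as [m [kk Hq]].
  exists m, kk. fold n.
  rewrite (Hc j Hj (INR n + q m kk)) by lra. symmetry. apply Hc; [exact Hj| lra].
Qed.

Lemma Adisc_spec : forall rho0 cs w i, disc_valid_input cs -> length cs = S i ->
  ismin (visited rho0 cs w) (nth i cs (fun _ => 0)) (Adisc rho0 cs w).
Proof.
  intros rho0 cs w i Hv Hl. unfold Adisc. rewrite Hl. apply amin_ismin.
  exists (B rho0 (cin cs) w (INR (length cs))). apply visited_all; [exact Hv|]. lra.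
Qed.

Lemma meas_const : forall (Q : Prop), meas Om (fun _ => Q).
Proof.
  intros Q. destruct (classic Q) as [h|h].
  - apply (meas_ext Om (fun _ => True)); [tauto| apply meas_full].
  - apply (meas_ext Om (fun w => ~ True)); [tauto| apply meas_compl, meas_full].
Qed.

Lemma meas_or : forall E1 E2, meas Om E1 -> meas Om E2 -> meas Om (fun w => E1 w \/ E2 w).
Proof.
  intros E1 E2 H1 H2.
  apply (meas_ext Om (fun w => exists n, (fun n w => if Nat.eqb n 0 then E1 w else E2 w) n w)).
  - intros w. split.
    + intros [n Hn]. destruct (Nat.eqb n 0); auto.
    + intros [h|h]; [exists 0%nat; exact h| exists 1%nat; exact h].
  - apply meas_cunion. intros n. destruct (Nat.eqb n 0); assumption.
Qed.

Lemma meas_not : forall E, meas Om E -> meas Om (fun w => ~ E w).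
Proof. intros E H. apply meas_compl, H. Qed.

Lemma meas_and : forall E1 E2, meas Om E1 -> meas Om E2 -> meas Om (fun w => E1 w /\ E2 w).
Proof.
  intros E1 E2 H1 H2.
  apply (meas_ext Om (fun w => ~ (~ E1 w \/ ~ E2 w))).
  - intros w. split; [intros h; split; apply NNPP; tauto| tauto].
  - apply meas_not, meas_or; apply meas_not; assumption.
Qed.

Lemma meas_forall_list : forall (E : X -> Omega Om -> Prop) (l' : list X),
  (forall z, meas Om (E z)) -> meas Om (fun w => forall z, In z l' -> E z w).
Proof.
  intros E l' H. induction l' as [|a r IH].
  - apply (meas_ext Om (fun _ => True)); [intros w; split; [intros _ z []| tauto]| apply meas_full].
  - apply (meas_ext Om (fun w => E a w /\ (forall z, In z r -> E z w))).
    + intros w. split.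
      * intros [h1 h2] z [->|hz]; auto.
      * intros h. split; [apply h; left; reflexivity| intros z hz; apply h; right; exact hz].
    + apply meas_and; [apply H| exact IH].
Qed.

Lemma amin_meas : forall x0 (Pm : Omega Om -> X -> Prop) x l',
  (forall y, meas Om (fun w => Pm w y)) -> meas Om (fun w => amin x0 (Pm w) l' = x).
Proof.
  intros x0 Pm x l' H. induction l' as [|a r IH].
  - simpl. apply meas_const.
  - apply (meas_ext Om (fun w => (Pm w a /\ a = x) \/ (~ Pm w a /\ amin x0 (Pm w) r = x))).
    + intros w. simpl. destruct (excluded_middle_informative (Pm w a)); tauto.
    + apply meas_or; apply meas_and; auto using meas_const, meas_not.
Qed.

Lemma visited_meas : forall rho0 cs y, disc_valid_input cs ->
  meas Om (fun w => visited rho0 cs w y).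
Proof.
  intros rho0 cs y Hv. destruct hB as [_ [_ HB3]].
  unfold visited. apply meas_cunion. intros m. apply meas_cunion. intros kk.
  apply HB3; [apply cin_valid; exact Hv|].
  pose proof (pos_INR (length cs)). pose proof (q_range m kk). lra.
Qed.

Lemma Adisc_meas : forall rho0 cs x, disc_valid_input cs -> meas Om (fun w => Adisc rho0 cs w = x).
Proof.
  intros rho0 cs x Hv. unfold Adisc. destruct (length cs) as [|i].
  - apply meas_const.
  - apply amin_meas. intros y. unfold ismin.
    apply meas_and; [apply visited_meas; exact Hv|].
    apply (meas_ext Om (fun w => forall z, In z l ->
              ~ visited rho0 cs w z \/ nth i cs (fun _ => 0) y <= nth i cs (fun _ => 0) z)).
    + intros w. split.
      * intros h z hz. destruct (h z (hl z)); [contradiction| assumption].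
      * intros h z _. destruct (classic (visited rho0 cs w z)); [right; auto| left; auto].
    + apply meas_forall_list. intros z. apply meas_or; [apply meas_not, visited_meas; exact Hv| apply meas_const].
Qed.

Lemma Adisc_alg : disc_alg Om Adisc.
Proof.
  split.
  - intros rho0 w. reflexivity.
  - intros rho0 cs x Hv. apply Adisc_meas; exact Hv.
Qed.

End Alg.

Lemma valid_firstn : forall {X} (cs : list (X -> R)) t, disc_valid_input cs -> disc_valid_input (firstn t cs).
Proof.
  intros X cs t. unfold disc_valid_input. revert cs. induction t; intros cs H; simpl; [constructor|].
  destruct cs; [constructor|]. inversion H; subst. constructor; auto.
Qed.

Lemma fl_INR : forall j, fl (INR j) = j.
Proof. intros j. apply fl_spec. lra. Qed.

Section Online.
Context {X : Type} (d : X -> X -> R) (hmet : is_metric d) (l : list X) (hl : forall x, In x l)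
  (Om : ProbSpace) (B : X -> (R -> X -> R) -> Omega Om -> R -> X) (hB : cont_alg Om B).

Lemma online_bound : forall rho0 cs w, disc_valid_input cs ->
  ele (Fin (disc_cost d (fun t => Adisc l Om B rho0 (firstn t cs) w) cs))
      (cont_cost d (cin cs) (B rho0 (cin cs) w)).
Proof.
  intros rho0 cs w Hv.
  set (n := length cs).
  set (rho := B rho0 (cin cs) w).
  set (x := fun t => Adisc l Om B rho0 (firstn t cs) w).
  pose proof hB as [HB1 [HB2 HB3]].
  pose proof (pos_INR n) as Hn.
  assert (Hcaus : forall t s, (t <= n)%nat -> 0 <= s < INR t + 1 ->
            B rho0 (cin (firstn t cs)) w s = rho s).
  { intros t s Ht Hs. apply HB1; [apply cin_valid, valid_firstn; exact Hv| apply cin_valid; exact Hv| lra|].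
    intros t' y Ht'. apply cin_firstn. lra. }
  assert (Hx : forall i, (i < n)%nat ->
     (exists s, INR (S i) <= s < INR (S i) + 1 /\ rho s = x (S i)) /\
     (forall s, INR (S i) <= s < INR (S i) + 1 -> nth i cs (fun _ => 0) (x (S i)) <= nth i cs (fun _ => 0) (rho s))).
  { intros i Hi.
    assert (Hlen : length (firstn (S i) cs) = S i) by (apply firstn_length_le; unfold n in Hi; lia).
    assert (Hnth : nth i (firstn (S i) cs) (fun _ => 0) = nth i cs (fun _ => 0)).
    { rewrite nth_firstn. replace (i <? S i)%nat with true; [reflexivity|]. symmetry; apply Nat.ltb_lt; lia. }
    pose proof (Adisc_spec l hl Om B hB rho0 (firstn (S i) cs) w i (valid_firstn cs (S i) Hv) Hlen) as [HV Hmin].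
    rewrite Hnth in Hmin. fold (x (S i)) in HV, Hmin.
    split.
    - destruct HV as [m [kk Hmk]]. rewrite Hlen in Hmk.
      exists (INR (S i) + q m kk). pose proof (q_range m kk). split; [lra|].
      rewrite <- Hmk. symmetry. apply Hcaus; [unfold n in Hi; lia|]. pose proof (pos_INR (S i)). lra.
    - intros s Hs. rewrite <- (Hcaus (S i) s) by (try (unfold n in Hi; lia); pose proof (pos_INR (S i)); lra).
      apply Hmin. apply visited_all; [exact hB| apply valid_firstn; exact Hv|]. rewrite Hlen. exact Hs. }
  destruct (HB2 rho0 (cin cs) w (cin_valid cs Hv)) as [H0 Hpc].
  fold rho in H0, Hpc.
  destruct (Hpc (INR n + 1) ltac:(lra)) as [k [p [HP Hc]]].
  set (f := fun s => cin cs s (rho s)).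
  assert (Hint : ex_RInt f 0 (INR n + 1)).
  { apply (pc_int (cin cs) rho (INR n + 1) k p HP Hc). intros y a b Ha Hab _. apply cin_int_sub; assumption. }
  assert (Hserv : rsum n (fun i => nth i cs (fun _ => 0) (x (S i))) <= RInt f 0 (INR n + 1)).
  { rewrite <- S_INR in Hint |- *. rewrite (int_split f (S n) Hint). rewrite rsum_shift.
    assert (H1 : 0 <= RInt f (INR 0) (INR 0 + 1)).
    { apply RInt_ge_0; [simpl; lra| apply (ex_RInt_sub f 0 (INR (S n))); auto; rewrite ?S_INR; simpl; lra|].
      intros s Hs. apply cin_nonneg; exact Hv. }
    assert (H2 : rsum n (fun i => nth i cs (fun _ => 0) (x (S i))) <=
                 rsum n (fun i => RInt f (INR (S i)) (INR (S i) + 1))).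
    { apply rsum_le. intros i Hi.
      assert (Hs1 : 0 <= INR (S i)) by apply pos_INR.
      assert (Hs2 : INR (S i) + 1 <= INR (S n)) by (rewrite <- S_INR; apply le_INR; lia).
      rewrite <- (Rmult_1_l (nth i cs (fun _ => 0) (x (S i)))).
      replace 1 with (INR (S i) + 1 - INR (S i)) at 1 by ring.
      rewrite <- RInt_const_R.
      apply RInt_le; [lra| apply ex_RInt_const| apply (ex_RInt_sub f 0 (INR (S n))); auto; lra|].
      intros s Hs. unfold f. rewrite (cin_piece cs (S i) s) by lra. simpl.
      apply (proj2 (Hx i Hi)). lra. }
    lra. }
  assert (Hmov : rsum n (fun i => d (x i) (x (S i))) <= movement d rho (INR n + 1)).
  { rewrite (movement_partition d hmet rho (INR n + 1) k p HP Hc).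
    set (E := fun t j => (j < k)%nat /\ exists s, INR t <= s < INR t + 1 /\ p j <= s < p (S j) /\ rho s = x t).
    assert (HE : forall t, (t <= n)%nat -> exists j, E t j).
    { intros t Ht.
      assert (Hs : exists s, INR t <= s < INR t + 1 /\ rho s = x t).
      { destruct t as [|i].
        - exists 0. simpl. split; [lra|]. rewrite H0. reflexivity.
        - destruct (Hx i ltac:(lia)) as [[s Hs] _]. exists s. exact Hs. }
      destruct Hs as [s [Hs1 Hs2]].
      assert (HsT : 0 <= s < INR n + 1).
      { pose proof (pos_INR t). assert (INR t <= INR n) by (apply le_INR; exact Ht). lra. }
      destruct (locate_open _ k p HP s HsT) as [j [Hj Hjs]].
      exists j. split; [exact Hj|]. exists s. auto. }
    set (e := fun t => epsilon (inhabits 0%nat) (E t)).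
    assert (He : forall t, (t <= n)%nat -> E t (e t)).
    { intros t Ht. apply epsilon_spec. apply HE; exact Ht. }
    assert (Hy : forall t, (t <= n)%nat -> rho (p (e t)) = x t).
    { intros t Ht. destruct (He t Ht) as [Hk [s [Hs1 [Hs2 Hs3]]]]. rewrite <- Hs3.
      symmetry. apply Hc; assumption. }
    assert (Hmono : forall t, (t < n)%nat -> (e t <= e (S t))%nat).
    { intros t Ht. destruct (He t ltac:(lia)) as [Hk1 [s1 [H11 [H12 H13]]]].
      destruct (He (S t) ltac:(lia)) as [Hk2 [s2 [H21 [H22 H23]]]].
      apply (index_mono (INR n + 1) k p HP s1 s2); try assumption.
      rewrite S_INR in H21. lra. }
    rewrite (rsum_ext n (fun i => d (x i) (x (S i))) (fun t => d (rho (p (e t))) (rho (p (e (S t)))))).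
    2:{ intros t Ht. rewrite (Hy t), (Hy (S t)) by lia. reflexivity. }
    pose proof (tele d hmet (fun j => rho (p j)) e n Hmono) as Ht. simpl in Ht.
    assert (HgN : forall j, 0 <= d (rho (p j)) (rho (p (S j)))) by (intros; apply d_nonneg; exact hmet).
    pose proof (rsum_nonneg (e 0%nat) _ HgN).
    destruct (He n (le_n n)) as [Hen _].
    pose proof (rsum_mono_len (e n) k _ ltac:(lia) HgN).
    lra. }
  unfold cont_cost. apply (esup_ge _ (Defs.RInt (fun t => cin cs t (rho t)) 0 (INR n + 1) + movement d rho (INR n + 1))).
  - exists (INR n + 1). split; [lra| reflexivity].
  - rewrite Defs_RInt_eq by exact Hint. fold f.
    unfold disc_cost. rewrite rsum_plus. fold n. lra.
Qed.

End Online.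

Lemma rsum_tail0 : forall a m N, (forall j, (m <= j)%nat -> a j = 0) -> (m <= N)%nat -> rsum N a = rsum m a.
Proof.
  intros a m N Ha HmN. induction HmN; [reflexivity|]. simpl. rewrite IHHmN, (Ha m0) by lia. ring.
Qed.

Lemma movement_zero : forall {X} (d : X -> X -> R) rho, movement d rho 0 = 0.
Proof.
  intros X d rho. unfold movement.
  destruct (excluded_middle_informative _) as [H|H]; [|reflexivity].
  destruct (constructive_indefinite_description _ H) as [L [HL1 HL2]]. simpl.
  destruct L as [|t L]; [reflexivity|].
  exfalso. destruct (proj1 (HL2 t) (or_introl eq_refl)) as [[h1 h2] _]. lra.
Qed.

Lemma fl_cases : forall m T, INR m < T <= INR m + 1 -> fl T = m \/ fl T = S m.
Proof.
  intros m T H. destruct (Rlt_dec T (INR m + 1)) as [h|h].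
  - left. apply fl_spec. lra.
  - right. apply fl_spec. rewrite S_INR. lra.
Qed.

Section Offline.
Context {X : Type} (d : X -> X -> R) (hmet : is_metric d).

Lemma offline_bound : forall rho0 (cs : list (X -> R)) (sigma : nat -> X), disc_valid_input cs ->
  sigma 0%nat = rho0 ->
  exists rho, piecewise_constant rho /\ rho 0 = rho0 /\
    ele (cont_cost d (cin cs) rho) (Fin (disc_cost d sigma cs)).
Proof.
  intros rho0 cs sigma Hv Hs0.
  set (n := length cs).
  set (sg := fun j => sigma (Nat.min j n)).
  set (rho := fun s => sg (fl s)).
  assert (Hpart : forall m T, INR m < T <= INR m + 1 ->
     forall i, (i < S m)%nat -> forall s, ipart m T i <= s < ipart m T (S i) -> rho s = rho (ipart m T i)).
  { intros m T Hm i Hi s Hs. unfold rho. rewrite (ipart_le m T i) by lia.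
    rewrite fl_INR. rewrite (fl_spec i s (ipart_piece m T i s Hm Hi Hs)). reflexivity. }
  exists rho. split; [|split].
  - intros T HT. destruct (int_part_ex T HT) as [m Hm].
    exists (S m), (ipart m T). split; [apply ipart_partition; exact Hm| apply Hpart; exact Hm].
  - unfold rho, sg. rewrite (fl_spec 0 0) by (simpl; lra). simpl. exact Hs0.
  - unfold cont_cost. apply esup_le.
    + exists (Defs.RInt (fun t => cin cs t (rho t)) 0 0 + movement d rho 0). exists 0. split; [lra| reflexivity].
    + intros v [T [HT ->]].
      set (f := fun t => cin cs t (rho t)).
      set (a := fun j => cval cs j (sg j)).
      assert (Hstep : forall j s, INR j < s < INR j + 1 -> f s = a j).
      { intros j s Hs. unfold f, a, rho. rewrite (fl_spec j s) by lra. apply cin_piece. lra. }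
      destruct (INR_unbounded (T + INR n + 1)) as [N HN].
      assert (HnN : (S n <= N)%nat).
      { apply INR_le. rewrite S_INR. generalize (pos_INR n) HN HT. generalize (INR n) (INR N). intros. lra. }
      destruct (step_int f a Hstep N) as [HiN HrN].
      pose proof (pos_INR n) as Hn0.
      assert (HiT : ex_RInt f 0 T) by (apply (ex_RInt_sub f 0 (INR N)); auto; lra).
      assert (HiT2 : ex_RInt f T (INR N)) by (apply (ex_RInt_sub f 0 (INR N)); auto; lra).
      assert (Hserv : Defs.RInt f 0 T <= rsum n (fun i => nth i cs (fun _ => 0) (sigma (S i)))).
      { rewrite Defs_RInt_eq by exact HiT.
        assert (HC := RInt_Chasles f 0 T (INR N) HiT HiT2).
        change (plus (RInt f 0 T) (RInt f T (INR N))) with (RInt f 0 T + RInt f T (INR N)) in HC.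
        assert (Hge : 0 <= RInt f T (INR N)).
        { apply RInt_ge_0; [lra| exact HiT2|]. intros s Hs. apply cin_nonneg; exact Hv. }
        assert (Hsum : rsum N a = rsum n (fun i => nth i cs (fun _ => 0) (sigma (S i)))).
        { rewrite (rsum_tail0 a (S n) N); [| |exact HnN].
          - rewrite rsum_shift. unfold a at 1. simpl cval. rewrite Rplus_0_l.
            apply rsum_ext. intros i Hi. unfold a, sg.
            rewrite Nat.min_l by (unfold n in Hi; lia). reflexivity.
          - intros j Hj. unfold a. destruct j as [|j]; [lia|]. simpl.
            rewrite nth_overflow by (unfold n in Hj; lia). reflexivity. }
        lra. }
      assert (Hmov : movement d rho T <= rsum n (fun i => d (sigma i) (sigma (S i)))).
      { assert (Hsg : forall M, rsum M (fun j => d (sg j) (sg (S j))) = rsum (Nat.min M n) (fun j => d (sigma j) (sigma (S j)))).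
        { induction M as [|M IH]; [reflexivity|].
          destruct (le_lt_dec n M) as [h|h].
          - rewrite Nat.min_r by lia. simpl. rewrite IH, Nat.min_r by lia.
            unfold sg. rewrite !Nat.min_r by lia. rewrite d_refl by exact hmet. ring.
          - rewrite Nat.min_l by lia. simpl. rewrite IH, Nat.min_l by lia.
            unfold sg. rewrite !Nat.min_l by lia. reflexivity. }
        assert (Hgn : forall j, 0 <= d (sigma j) (sigma (S j))) by (intros; apply d_nonneg; exact hmet).
        destruct (Req_dec T 0) as [->|HT0].
        - rewrite movement_zero. apply rsum_nonneg; exact Hgn.
        - destruct (int_part_ex T ltac:(lra)) as [m Hm].
          rewrite (movement_partition d hmet rho T (S m) (ipart m T) (ipart_partition m T Hm) (Hpart m T Hm)).
          apply Rle_trans with (rsum (S m) (fun j => d (sg j) (sg (S j)))).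
          + apply rsum_le. intros j Hj. unfold rho.
            rewrite (ipart_le m T j) by lia. rewrite fl_INR.
            destruct (Nat.eq_dec j m) as [->|hj].
            * rewrite ipart_Sm. destruct (fl_cases m T Hm) as [E|E]; rewrite E.
              -- rewrite d_refl by exact hmet. apply d_nonneg; exact hmet.
              -- lra.
            * rewrite (ipart_le m T (S j)) by lia. rewrite fl_INR. lra.
          + rewrite Hsg. apply rsum_mono_len; [lia| exact Hgn]. }
      unfold disc_cost. rewrite rsum_plus. fold n. fold f. lra.
Qed.

End Offline.

Lemma disc_cost_nonneg : forall {X} (d : X -> X -> R) (hmet : is_metric d) sigma cs,
  disc_valid_input cs -> 0 <= disc_cost d sigma cs.
Proof.
  intros X d hmet sigma cs Hv. unfold disc_cost. apply rsum_nonneg. intros j.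
  pose proof (nth_nonneg cs Hv j (sigma (S j))). pose proof (d_nonneg d hmet (sigma j) (sigma (S j))). lra.
Qed.

Theorem mainTheorem4 (X : Type) (d : X -> X -> R)
  (hfin : finite_type X) (hmet : is_metric d)
  (alpha : R) (halpha : 1 <= alpha) :
  cont_competitive d alpha -> disc_competitive d alpha.
Proof.
  intros [Om [B [hB hcomp]]]. destruct hfin as [l hl].
  exists Om, (Adisc l Om B). split; [apply Adisc_alg; assumption|].
  intros rho0. destruct (hcomp rho0) as [beta Hbeta]. exists beta. intros cs Hv.
  eapply ele_trans.
  { apply (Exp_mono Om _ (fun w => cont_cost d (cin cs) (B rho0 (cin cs) w))).
    - intros w. simpl. apply disc_cost_nonneg; assumption.
    - intros w. apply online_bound; assumption. }
  eapply ele_trans; [apply (Hbeta (cin cs) (cin_valid cs Hv))|].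
  apply eaffine_mono; [lra|].
  unfold cont_opt, disc_opt. apply einf_mono.
  - intros r [sigma [Hs0 Hr]].
    destruct (offline_bound d hmet rho0 cs sigma Hv Hs0) as [rho [Hpc [H0 Hle]]].
    destruct (cont_cost d (cin cs) rho) as [r'|] eqn:E; [|contradiction].
    exists r'. split.
    + exists rho. split; [exact Hpc| split; [exact H0| symmetry; exact E]].
    + injection Hr as ->. exact Hle.
  - intros r [sigma [_ Hr]]. injection Hr as ->. apply disc_cost_nonneg; assumption.
Qed.
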